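(* Let $\gamma_1,\gamma_2>0$ and consider the birth-death chain RDS $(\theta,\varphi)$ on $\mathbb{N}_0$ described in the context. For every $(x_0,y_0)\in\mathbb{N}_0^2$, the two-point motion $(\varphi^n_q(x_0),\varphi^n_q(y_0))_{n\in\mathbb{N}_0}$ reaches the thick diagonal $\mathbb{D}:=\{(x,y)\in\mathbb{N}_0^2: y\in\{x-1,x,x+1\}\}$ in finite time $\mathbb{P}$-almost surely, i.e. $\mathbb{P}\big(\exists n\geq0: (\varphi^n_q(x_0),\varphi^n_q(y_0))\in\mathbb{D}\big)=1$.
   Context: Noise space: $\mathcal{Q}_+=\{q=(q_n)_{n\in\mathbb{N}_0}: q_n\in[0,1]\}$ with the product Borel $\sigma$-algebra and the product measure $\mathbb{P}=\lambda^{\mathbb{N}_0}$, $\lambda$ Lebesgue measure on $[0,1]$; shift $\theta(q_0,q_1,\dots)=(q_1,q_2,\dots)$. For $q\in\mathcal{Q}_+$ define $f_q:\mathbb{N}_0\to\mathbb{N}_0$ by $f_q(x)=x+1$ if $q_0<\frac{\gamma_1}{\gamma_1+\gamma_2x}$ and $f_q(x)=x-1$ otherwise. The cocycle is $\varphi^0_q(x)=x$ and $\varphi^n_q(x)=f_{\theta^{n-1}q}\circ\cdots\circ f_q(x)$ for $n\geq1$. The pair $(\varphi^n_q(x_0),\varphi^n_q(y_0))_n$ with the same $q$ is called the two-point motion. *)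

(* Defs.v *)
From HB Require Import structures.
From mathcomp Require Import all_boot all_order all_algebra.
From mathcomp Require Import all_classical all_reals all_analysis.
Set Implicit Arguments. Unset Strict Implicit. Unset Printing Implicit Defensive.
Import Order.TTheory GRing.Theory Num.Theory.
Import numFieldNormedType.Exports.
Local Open Scope classical_set_scope.
Local Open Scope ring_scope.

Section Defs.
Variable R : realType.

Definition seqR : Type := nat -> R.

Definition coord_sets : set (set seqR) :=
  [set A | exists n (B : set R), measurable B /\ A = (fun q : seqR => q n) @^-1` B].

Definition Qplus := g_sigma_algebraType coord_sets.

Definition unit_interval : set R := `[0, 1]%classic.

(* P is the product measure lambda^{N_0} of Lebesgue measure on [0,1]:
   its value on every finite-dimensional cylinder is the product of the
   Lebesgue measures of the (restricted to [0,1]) Borel bases. *)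
Definition is_product_uniform (P : probability Qplus R) : Prop :=
  forall (n : nat) (B : nat -> set R), (forall i, measurable (B i)) ->
    P (\bigcap_(i in `I_n) ((fun q : Qplus => q i) @^-1` B i)) =
    (\prod_(i < n) (@lebesgue_measure R) (B i `&` unit_interval))%E.

Definition shiftn (m : nat) (q : nat -> R) : nat -> R := fun k => q (k + m)%N.

(* one step f_q of the birth-death chain (x - 1 is truncated at 0, only
   relevant on the null event q_0 = 1 when x = 0) *)
Definition fstep (g1 g2 : R) (q : nat -> R) (x : nat) : nat :=
  if q 0%N < g1 / (g1 + g2 * x%:R) then x.+1 else x.-1.

Fixpoint phi (g1 g2 : R) (n : nat) (q : nat -> R) (x : nat) : nat :=
  match n with
  | 0 => x
  | m.+1 => fstep g1 g2 (shiftn m q) (phi g1 g2 m q x)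
  end.

End Defs.

Definition thick_diag (x y : nat) : Prop :=
  (y.+1 = x) \/ y = x \/ y = x.+1.

(* Main.v *)
Require Import Defs.
From HB Require Import structures.
From mathcomp Require Import all_boot all_order all_algebra.
From mathcomp Require Import all_classical all_reals all_analysis.
From mathcomp Require Import zify ring lra.
Import Order.TTheory GRing.Theory Num.Theory.
Import numFieldNormedType.Exports.
Local Open Scope classical_set_scope.
Local Open Scope ring_scope.

Definition thickb (x y : nat) : bool := (y.+1 == x) || (y == x) || (y == x.+1).

Lemma thickP x y : thick_diag x y <-> thickb x y.
Proof.
rewrite /thick_diag /thickb; split.
  by case=> [->|[->|->]]; rewrite eqxx ?orbT.
by case/orP=> [/orP[]|] /eqP ->; auto.
Qed.

Lemma thick_sym x y : thick_diag x y <-> thick_diag y x.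
Proof. rewrite !thickP /thickb; split => /orP[/orP[]|] /eqP ->; rewrite eqxx ?orbT //. Qed.

Lemma nthick_ord x y : (x <= y)%N -> ~~ thickb x y -> (x.+2 <= y)%N.
Proof. rewrite /thickb => h; rewrite !negb_or => /andP[/andP[h1 h2] h3]; lia. Qed.

Section Chain.
Variables (R : realType) (g1 g2 : R).
Hypotheses (hg1 : 0 < g1) (hg2 : 0 < g2).

Definition c (x : nat) : R := g1 / (g1 + g2 * x%:R).
Definition fs (r : R) (x : nat) : nat := if r < c x then x.+1 else x.-1.

Lemma c_gt0 x : 0 < c x.
Proof. rewrite /c divr_gt0 // ltr_wpDr // mulr_ge0 // ltW //. Qed.

Lemma c_le1 x : c x <= 1.
Proof. rewrite /c ler_pdivrMr ?mul1r ?ler_wpDr ?mulr_ge0 // ?ltW // ltr_wpDr // mulr_ge0 // ltW //. Qed.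

Lemma c0 : c 0 = 1.
Proof. by rewrite /c mulr0 addr0 divff // gt_eqF. Qed.

Lemma s_gt0 x : 0 < g1 + g2 * x%:R.
Proof. by rewrite ltr_wpDr // mulr_ge0 // ltW. Qed.

Lemma c_anti x y : (x <= y)%N -> c y <= c x.
Proof.
move=> hxy; rewrite /c ler_pM2l // lef_pV2 ?posrE ?s_gt0 //.
by rewrite lerD2l; apply: ler_wpM2l; [exact: ltW | rewrite ler_nat].
Qed.

Definition K : R := 3 * g1 / g2 + 2.

Lemma K_g2 : K * g2 = 3 * g1 + 2 * g2.
Proof. rewrite /K mulrDl mulrAC -mulrA divff ?gt_eqF // mulr1 //. Qed.

Lemma K_ge2 : 2 <= K.
Proof. rewrite /K lerDr divr_ge0 // ?mulr_ge0 // ltW //. Qed.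

Definition V (x y : nat) : R := 2 * x%:R + K * (y%:R - x%:R).

Lemma V_ge0 x y : (x <= y)%N -> 0 <= V x y.
Proof.
move=> h; rewrite /V addr_ge0 // ?mulr_ge0 // ?subr_ge0 ?ler_nat //.
by apply: le_trans K_ge2.
Qed.

Definition T (F : nat -> nat -> R) (x y : nat) : R :=
  c y * F x.+1 y.+1 + (c x - c y) * F x.+1 y.-1 + (1 - c x) * F x.-1 y.-1.

Lemma T_mono F F' x y : (x.+2 <= y)%N ->
  (forall u v, (u <= v)%N -> F u v <= F' u v) -> T F x y <= T F' x y.
Proof.
move=> hxy hF; rewrite /T.
have hcy := ltW (c_gt0 y).
have hcxy : 0 <= c x - c y by rewrite subr_ge0 c_anti //; lia.
have hcx : 0 <= 1 - c x by rewrite subr_ge0 c_le1.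
rewrite lerD // ?lerD //; apply: ler_wpM2l => //; apply: hF; lia.
Qed.

Lemma T_add F F' x y : T (fun u v => F u v + F' u v) x y = T F x y + T F' x y.
Proof. rewrite /T; ring. Qed.

Lemma T_cst (a : R) x y : T (fun _ _ => a) x y = a.
Proof. rewrite /T; ring. Qed.

Lemma key_ineq x y : (x.+2 <= y)%N -> 4 * c x - 1 <= 2 * K * (c x - c y).
Proof.
move=> hxy; rewrite /c.
set s := g1 + g2 * x%:R; set t := g1 + g2 * y%:R.
have hs : g1 <= s by rewrite /s lerDl mulr_ge0 // ltW.
have hs0 : 0 < s by apply: lt_le_trans hs.
have hts : 2 * g2 <= t - s.
  have -> : t - s = (y%:R - x%:R) * g2 by rewrite /t /s; ring.
  apply: ler_wpM2r; first exact: ltW.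
  rewrite -natrB; last by lia.
  by rewrite ler_nat; lia.
have ht0 : 0 < t.
  have : 0 < 2 * g2 by rewrite mulr_gt0.
  move: hts hs0; clearbody s t; lra.
clearbody s t.
have E : (4 * (g1 / s) - 1 - 2 * K * (g1 / s - g1 / t)) * (s * t) =
    (4 * g1 - s) * t - 2 * K * g1 * (t - s).
  by field; rewrite ?gt_eqF.
have hK := K_ge2; have hKg := K_g2.
have hneg : (4 * g1 - s) * t - 2 * K * g1 * (t - s) <= 0.
  set u := t - s.
  have tE : t = s + u by rewrite /u; ring.
  clearbody u.
  have h2g : 0 < 2 * g2 by rewrite mulr_gt0.
  have hu : 0 <= u by lra.
  have hKu : 0 <= K * u by rewrite mulr_ge0 //; lra.
  case: (leP (4 * g1) s) => hs4.
    have : (4 * g1 - s) * t <= 0 by rewrite mulr_le0_ge0 ?subr_le0 // ltW.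
    have hK0 : 0 <= K by lra.
    have : 0 <= K * g1 * u by rewrite !mulr_ge0 // ltW.
    lra.
  have h1 : (4 * g1 - s) * t <= 3 * g1 * t by apply: ler_wpM2r; [exact: ltW | lra].
  have h2 : (2 * K - 3) * (2 * g2) <= (2 * K - 3) * u by apply: ler_wpM2l; lra.
  have h3 : 3 * t <= 2 * K * u by nra.
  have h4 : g1 * (3 * t) <= g1 * (2 * K * u) by apply: ler_wpM2l; [exact: ltW | lra].
  nra.
have hst : 0 < s * t by rewrite mulr_gt0.
suff : 4 * (g1 / s) - 1 - 2 * K * (g1 / s - g1 / t) <= 0 by lra.
have -> : 4 * (g1 / s) - 1 - 2 * K * (g1 / s - g1 / t) =
   ((4 * g1 - s) * t - 2 * K * g1 * (t - s)) * (s * t)^-1.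
  by rewrite -E mulfK // gt_eqF.
by rewrite mulr_le0_ge0 // invr_ge0 ltW.
Qed.

Lemma drift x y : (x.+2 <= y)%N -> T V x y <= V x y - 1.
Proof.
move=> hxy.
have hk := key_ineq x y hxy.
have hy : y = y.-1.+1 by lia.
have e3 : (1 - c x) * V x.-1 y.-1 = (1 - c x) * (V x y - 2).
  case: x hxy hk => [|x] hxy hk; first by rewrite c0 subrr !mul0r.
  rewrite /V /= hy /= -!natr1 /=; ring.
rewrite /T e3 /V.
have ey : y.-1%:R = y%:R - 1 :> R by rewrite [in RHS]hy -natr1 addrK.
rewrite ey -!natr1.
nra.
Qed.

Fixpoint A (m x y : nat) : R :=
  match m with
  | 0 => if thickb x y then 0 else 1
  | m'.+1 => if thickb x y then 0 else T (A m') x y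
  end.

Fixpoint G (m x y : nat) : R :=
  match m with
  | 0 => if thickb x y then 0 else V x y
  | m'.+1 => if thickb x y then 0 else T (G m') x y
  end.

Lemma A_S m x y : A m.+1 x y = if thickb x y then 0 else T (A m) x y.
Proof. by []. Qed.
Lemma G_S m x y : G m.+1 x y = if thickb x y then 0 else T (G m) x y.
Proof. by []. Qed.
Lemma A_0 x y : A 0 x y = if thickb x y then 0 else 1.
Proof. by []. Qed.
Lemma G_0 x y : G 0 x y = if thickb x y then 0 else V x y.
Proof. by []. Qed.

Lemma A_ge0 m x y : (x <= y)%N -> 0 <= A m x y.
Proof.
elim: m x y => [|m IH] x y hxy; rewrite ?A_0 ?A_S; case: ifP => // hth.
have h2 := nthick_ord _ _ hxy (negbT hth).
rewrite -(T_cst 0 x y); apply: T_mono => // u v huv; exact: IH.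
Qed.

Lemma A_le1 x y : A 0 x y <= 1.
Proof. by rewrite A_0; case: ifP. Qed.

Lemma A_decr m x y : (x <= y)%N -> A m.+1 x y <= A m x y.
Proof.
elim: m x y => [|m IH] x y hxy; rewrite A_S; case: ifP => hth.
- by rewrite A_0 hth.
- have h2 := nthick_ord _ _ hxy (negbT hth).
  rewrite A_0 hth -(T_cst 1 x y); apply: T_mono => // u v huv; exact: A_le1.
- by rewrite A_S hth.
- have h2 := nthick_ord _ _ hxy (negbT hth).
  rewrite (A_S m) hth; apply: T_mono => // u v huv; exact: IH.
Qed.

Lemma G_ge0 m x y : (x <= y)%N -> 0 <= G m x y.
Proof.
elim: m x y => [|m IH] x y hxy; rewrite ?G_0 ?G_S; case: ifP => // hth; first exact: V_ge0.
have h2 := nthick_ord _ _ hxy (negbT hth).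
rewrite -(T_cst 0 x y); apply: T_mono => // u v huv; exact: IH.
Qed.

Lemma G_leV x y : (x <= y)%N -> G 0 x y <= V x y.
Proof. by move=> h; rewrite G_0; case: ifP => // _; exact: V_ge0. Qed.

Lemma GA m x y : (x <= y)%N -> G m.+1 x y + A m x y <= G m x y.
Proof.
elim: m x y => [|m IH] x y hxy; rewrite G_S; case: ifP => hth.
- by rewrite A_0 G_0 hth addr0.
- have h2 := nthick_ord _ _ hxy (negbT hth).
  rewrite A_0 G_0 hth.
  have : T (G 0) x y <= T V x y by apply: T_mono => // u v huv; exact: G_leV.
  have := drift _ _ h2; lra.
- by rewrite A_S G_S hth addr0.
- have h2 := nthick_ord _ _ hxy (negbT hth).
  rewrite A_S (G_S m) hth -T_add.
  apply: T_mono => // u v huv; exact: IH.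
Qed.

Lemma GAm m x y : (x <= y)%N -> G m x y + m%:R * A m x y <= V x y.
Proof.
move=> hxy; elim: m => [|m IH]; first by rewrite mul0r addr0 G_leV.
have h1 := GA m _ _ hxy; have h2 := A_decr m _ _ hxy; have h3 := A_ge0 m.+1 _ _ hxy.
have h4 : m.+1%:R * A m.+1 x y <= m.+1%:R * A m x y by apply: ler_wpM2l.
rewrite -natr1 in h4 *; lra.
Qed.

Lemma mA_leV m x y : (x <= y)%N -> m%:R * A m x y <= V x y.
Proof. move=> h; have := GAm m _ _ h; have := G_ge0 m _ _ h; lra. Qed.

Fixpoint ch (i j x : nat) (q : nat -> R) : nat :=
  match i with 0 => x | i'.+1 => ch i' j.+1 (fs (q j) x) q end.

Lemma chS i j x q : ch i.+1 j x q = fs (q (i + j)%N) (ch i j x q).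
Proof.
elim: i j x => [|i IH] j x //.
have -> : ch i.+2 j x q = ch i.+1 j.+1 (fs (q j) x) q by [].
by rewrite IH addnS.
Qed.

Lemma phi_ch n q x : phi g1 g2 n q x = ch n 0 x q.
Proof. by elim: n => [|n IH] //; rewrite chS addn0 -IH. Qed.

Fixpoint Ev (m j x y : nat) : set (Qplus R) :=
  match m with
  | 0 => [set _ | ~~ thickb x y]
  | m'.+1 => [set q | ~~ thickb x y /\ Ev m' j.+1 (fs (q j) x) (fs (q j) y) q]
  end.

Lemma Ev_ch m j x y (q : Qplus R) :
  Ev m j x y q <-> forall i, (i <= m)%N -> ~~ thickb (ch i j x q) (ch i j y q).
Proof.
elim: m j x y => [|m IH] j x y /=.
  by split=> [h [|i] //|h]; exact: (h 0%N).
split=> [[h0 /IH h] [|i] hi //=|h]; first exact: h.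
split; first exact: (h 0%N).
by apply/IH => i hi; apply: (h i.+1).
Qed.

Lemma coord_meas j (B : set R) : measurable B ->
  measurable ((fun q : Qplus R => q j) @^-1` B).
Proof. by move=> hB; apply: sub_sigma_algebra; exists j, B. Qed.

Lemma lt_meas j a : measurable [set q : Qplus R | q j < a].
Proof.
have -> : [set q : Qplus R | q j < a] = (fun q : Qplus R => q j) @^-1` `]-oo, a[%classic.
  by apply/seteqP; split => q /=; rewrite in_itv /=.
by apply: coord_meas; exact: measurable_itv.
Qed.

Lemma cst_meas (b : bool) : measurable [set _ : Qplus R | b].
Proof.
case: b.
  have -> : [set _ : Qplus R | true] = setT by apply/seteqP; split.
  exact: measurableT.
have -> : [set _ : Qplus R | false] = set0 by apply/seteqP; split => q.
exact: measurable0.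
Qed.

Lemma Ev_meas m j x y : measurable (Ev m j x y).
Proof.
elim: m j x y => [|m IH] j x y; first exact: cst_meas.
set Lx := [set q : Qplus R | q j < c x]; set Ly := [set q : Qplus R | q j < c y].
have -> : Ev m.+1 j x y = [set _ | ~~ thickb x y] `&`
   ((Lx `&` Ly `&` Ev m j.+1 x.+1 y.+1) `|` (Lx `&` ~` Ly `&` Ev m j.+1 x.+1 y.-1) `|`
    (~` Lx `&` Ly `&` Ev m j.+1 x.-1 y.+1) `|` (~` Lx `&` ~` Ly `&` Ev m j.+1 x.-1 y.-1)).
  apply/seteqP; split => q /=; rewrite /Lx /Ly /fs.
    move=> [h]; case: ifP => hx; case: ifP => hy hE; split => //.
    - by left; left; left.
    - by left; left; right; split => //; split => //=; rewrite hy.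
    - by left; right; split => //; split => //=; rewrite hx.
    - by right; split => //; split => /=; rewrite ?hx ?hy.
  move=> [h H]; split => //.
  case: H => [[[|]|]|] [[hx hy] hE].
  - by rewrite hx hy.
  - by rewrite hx ifF //; apply/negbTE/negP.
  - by rewrite hy ifF //; apply/negbTE/negP.
  - by rewrite !ifF //; apply/negbTE/negP.
have mL := lt_meas j (c x); have mL' := lt_meas j (c y).
apply: measurableI; first exact: cst_meas.
by repeat apply: measurableU; repeat apply: measurableI;
  rewrite ?/Lx ?/Ly //; try apply: measurableC.
Qed.

Variable P : probability (Qplus R) R.
Hypothesis HP : is_product_uniform P.

Definition cyl (j : nat) (B : nat -> set R) : set (Qplus R) :=
  \bigcap_(i in `I_j) ((fun q : Qplus R => q i) @^-1` B i).

Lemma cyl_meas j B : (forall i, measurable (B i)) -> measurable (cyl j B).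
Proof. by move=> hB; apply: bigcap_measurableType => i _; exact: coord_meas. Qed.

Lemma P_cyl j B : (forall i, measurable (B i)) ->
  P (cyl j B) = (\prod_(i < j) (@lebesgue_measure R) (B i `&` @unit_interval R))%E.
Proof. by move=> hB; rewrite /cyl HP. Qed.

Definition upd (B : nat -> set R) j S := fun i => if i == j then S else B i.

Lemma cyl_S j B S : cyl j B `&` ((fun q : Qplus R => q j) @^-1` S) = cyl j.+1 (upd B j S).
Proof.
apply/seteqP; split => q /=.
  move=> [hc hS] i /= hi; rewrite /upd; case: eqP => [->//|hne].
  by apply: hc => /=; lia.
move=> h; split.
  move=> i /= hi; have := h i; rewrite /upd ifF; last by apply/eqP; lia.
  by apply => /=; lia.
by have := h j; rewrite /upd eqxx; apply => /=.
Qed.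

Lemma P_cyl_S j B S : (forall i, measurable (B i)) -> measurable S ->
  P (cyl j.+1 (upd B j S)) = (P (cyl j B) * (@lebesgue_measure R) (S `&` @unit_interval R))%E.
Proof.
move=> hB hS.
have hB' : forall i, measurable (upd B j S i) by move=> i; rewrite /upd; case: eqP.
rewrite !P_cyl // big_ord_recr /= /upd eqxx.
congr (_ * _)%E; apply: eq_bigr => i _; rewrite ifF //; apply/eqP => /= h.
by have := ltn_ord i; rewrite h ltnn.
Qed.

Lemma leb_itv (l u : R) (bl br : bool) : l <= u ->
  (@lebesgue_measure R) [set` Interval (BSide bl l) (BSide br u)] = (u - l)%:E.
Proof.
move=> hlu; rewrite lebesgue_measure_itv /= lte_fin.
case: ltP => h; first by rewrite -EFinD.
have -> : u = l by apply: le_anti; rewrite hlu h.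
by rewrite subrr.
Qed.

Lemma lam1 b : 0 < b -> b <= 1 ->
  (@lebesgue_measure R) (`]-oo, b[%classic `&` @unit_interval R) = b%:E.
Proof.
move=> h0 h1.
have -> : `]-oo, b[%classic `&` @unit_interval R = [set` `[0, b[].
  apply/seteqP; split => r /=; rewrite /unit_interval /= !in_itv /=.
    by move=> [hb /andP[h0r _]]; rewrite h0r hb.
  by move=> /andP[h0r hb]; split => //; rewrite h0r /=; apply: ltW (lt_le_trans hb h1).
by rewrite leb_itv ?subr0 // ltW.
Qed.

Lemma lam2 a b : 0 <= b -> b <= a -> a <= 1 ->
  (@lebesgue_measure R) (`[b, a[%classic `&` @unit_interval R) = (a - b)%:E.
Proof.
move=> h0 h1 h2.
have -> : `[b, a[%classic `&` @unit_interval R = [set` `[b, a[].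
  apply/seteqP; split => r /=; rewrite /unit_interval /= !in_itv /=.
    by move=> [] //.
  move=> /andP[hb ha]; split; first by rewrite hb ha.
  by rewrite (le_trans h0 hb) /=; apply: ltW (lt_le_trans ha h2).
by rewrite leb_itv.
Qed.

Lemma lam3 a : 0 <= a -> a <= 1 ->
  (@lebesgue_measure R) (`[a, +oo[%classic `&` @unit_interval R) = (1 - a)%:E.
Proof.
move=> h0 h1.
have -> : `[a, +oo[%classic `&` @unit_interval R = [set` `[a, 1]].
  apply/seteqP; split => r /=; rewrite /unit_interval /= !in_itv /=.
    by rewrite andbT => -[-> /andP[_ ->]].
  move=> /andP[ha h1r]; rewrite andbT; split => //.
  by rewrite (le_trans h0 ha) h1r.
by rewrite leb_itv.
Qed.

Lemma upd_meas B j S : (forall i, measurable (B i)) -> measurable S ->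
  forall i, measurable (upd B j S i).
Proof. by move=> hB hS i; rewrite /upd; case: eqP. Qed.

Lemma key m : forall j x y B, (forall i, measurable (B i)) -> (x <= y)%N ->
  (P (cyl j B `&` Ev m j x y) <= P (cyl j B) * (A m x y)%:E)%E.
Proof.
elim: m => [|m IH] j x y B hB hxy.
  rewrite A_0 /=; case: (thickb x y) => /=.
    rewrite mule0 (_ : _ `&` _ = set0) ?measure0 //.
    by apply/seteqP; split => q // [].
  rewrite mule1 (_ : _ `&` _ = cyl j B) //.
  apply/seteqP; split => q /=; first by case.
  by move=> h; split.
rewrite A_S; case: ifP => hth.
  rewrite mule0 (_ : _ `&` _ = set0) ?measure0 //.
  by apply/seteqP; split => q // [_ []]; rewrite hth.
have h2 := nthick_ord _ _ hxy (negbT hth).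
have hba : c y <= c x by apply: c_anti; lia.
have ha1 := c_le1 x; have hb0 := c_gt0 y.
set a := c x in hba ha1 *; set b := c y in hba hb0 *.
set S1 := `]-oo, b[%classic; set S2 := `[b, a[%classic; set S3 := `[a, +oo[%classic.
have mS1 : measurable S1 by exact: measurable_itv.
have mS2 : measurable S2 by exact: measurable_itv.
have mS3 : measurable S3 by exact: measurable_itv.
have hB1 := upd_meas _ j _ hB mS1; have hB2 := upd_meas _ j _ hB mS2; have hB3 := upd_meas _ j _ hB mS3.
set U1 := cyl j.+1 (upd B j S1) `&` Ev m j.+1 x.+1 y.+1.
set U2 := cyl j.+1 (upd B j S2) `&` Ev m j.+1 x.+1 y.-1.
set U3 := cyl j.+1 (upd B j S3) `&` Ev m j.+1 x.-1 y.-1.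
have mU1 : measurable U1 by apply: measurableI; [exact: cyl_meas | exact: Ev_meas].
have mU2 : measurable U2 by apply: measurableI; [exact: cyl_meas | exact: Ev_meas].
have mU3 : measurable U3 by apply: measurableI; [exact: cyl_meas | exact: Ev_meas].
have sub : cyl j B `&` Ev m.+1 j x y `<=` U1 `|` U2 `|` U3.
  move=> q [hc [_ hE]]; rewrite /U1 /U2 /U3 -!cyl_S.
  case: (ltP (q j) b) => h.
    have fx : fs (q j) x = x.+1 by rewrite /fs ifT // (lt_le_trans h hba).
    have fy : fs (q j) y = y.+1 by rewrite /fs ifT.
    by left; left; split; [split => //= | rewrite -fx -fy].
  case: (ltP (q j) a) => h'.
    have fx : fs (q j) x = x.+1 by rewrite /fs ifT.
    have fy : fs (q j) y = y.-1 by rewrite /fs ltNge h.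
    by left; right; split; [split => //; rewrite /S2 /= in_itv /= h h' | rewrite -fx -fy].
  have fx : fs (q j) x = x.-1 by rewrite /fs ltNge h'.
  have fy : fs (q j) y = y.-1 by rewrite /fs ltNge (le_trans hba h').
  by right; split; [split => //; rewrite /S3 /= in_itv /= h' | rewrite -fx -fy].
have fr : P (cyl j B) \is a fin_num by apply: fin_num_measure; exact: cyl_meas.
have i1 := IH j.+1 x.+1 y.+1 (upd B j S1) hB1 hxy.
have i2 := IH j.+1 x.+1 y.-1 (upd B j S2) hB2 ltac:(lia).
have i3 := IH j.+1 x.-1 y.-1 (upd B j S3) hB3 ltac:(lia).
rewrite P_cyl_S // (lam1 _ hb0 (le_trans hba ha1)) in i1.
rewrite P_cyl_S // (lam2 _ _ (ltW hb0) hba ha1) in i2.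
rewrite P_cyl_S // (lam3 _ (ltW (lt_le_trans hb0 hba)) ha1) in i3.
rewrite -(fineK fr) -!EFinM in i1 i2 i3 *.
have u12 := @measure_function.measureU2 _ _ _ P U1 U2 mU1 mU2.
have mU12 : measurable (U1 `|` U2) by apply: measurableU.
have u123 := @measure_function.measureU2 _ _ _ P _ U3 mU12 mU3.
apply: le_trans (le_measure _ _ _ sub) _.
- by rewrite inE; apply: measurableI; [exact: cyl_meas | exact: Ev_meas].
- by rewrite inE; apply: measurableU => //; exact: measurableU.
apply: le_trans u123 _.
apply: le_trans (leeD u12 (lexx _)) _.
apply: le_trans (leeD (leeD i1 i2) i3) _.
rewrite -!EFinD lee_fin /T -/a -/b.
lra.
Qed.

Lemma cyl0 B : cyl 0 B = setT.
Proof. by apply/seteqP; split => q // _ i /=; rewrite ltn0. Qed.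

Lemma P_Ev m x y : (x <= y)%N -> (P (Ev m 0 x y) <= (A m x y)%:E)%E.
Proof.
move=> hxy.
have := key m 0 x y (fun _ => setT) (fun _ => measurableT) hxy.
by rewrite cyl0 setTI probability_setT mul1e.
Qed.

Lemma main_ord x0 y0 : (x0 <= y0)%N ->
  P [set q : Qplus R | exists n : nat,
       thick_diag (phi g1 g2 n q x0) (phi g1 g2 n q y0)] = 1%E.
Proof.
move=> hxy.
set Z := \bigcap_m Ev m 0 x0 y0.
have eE : [set q : Qplus R | exists n : nat,
       thick_diag (phi g1 g2 n q x0) (phi g1 g2 n q y0)] = ~` Z.
  apply/seteqP; split => q /=.
    move=> [n hn] hall; have /Ev_ch h := hall n I.
    have := h n (leqnn n); rewrite -!phi_ch; apply/negP; rewrite negbK.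
    exact/thickP.
  move=> hnot; case: (pselect (exists n, thick_diag (phi g1 g2 n q x0) (phi g1 g2 n q y0))) => // hno.
  exfalso; apply: hnot => m _; apply/Ev_ch => i _; apply/negP => /thickP hth.
  by apply: hno; exists i; rewrite !phi_ch.
have mZ : measurable Z by apply: bigcapT_measurable => m; exact: Ev_meas.
rewrite eE probability_setC //.
suff -> : P Z = 0%E by rewrite sube0.
have fZ : P Z \is a fin_num by apply: fin_num_measure.
have Z0 : (0 <= P Z)%E by apply: measure_ge0.
have hZ m : (P Z <= (A m x0 y0)%:E)%E.
  apply: (le_trans _ (P_Ev m _ _ hxy)).
  apply: le_measure; rewrite ?inE //; first exact: Ev_meas.
  by move=> q hq; exact: hq.
rewrite -(fineK fZ) in Z0 hZ *.
set r := fine (P Z) in Z0 hZ *.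
rewrite lee_fin in Z0; congr EFin.
apply: le_anti; rewrite Z0 andbT leNgt; apply/negP => hr0.
set M := Num.Def.archi_bound (V x0 y0 / r).
have hM : V x0 y0 / r < M%:R by apply: archi_boundP; rewrite divr_ge0 // ?V_ge0 // ltW.
have h1 : V x0 y0 < M%:R * r by rewrite -ltr_pdivrMr.
have h2 := mA_leV M x0 y0 hxy.
have h3 : M%:R * r <= M%:R * A M x0 y0 by apply: ler_wpM2l => //; rewrite -lee_fin.
by have := lt_le_trans h1 (le_trans h3 h2); rewrite ltxx.
Qed.

End Chain.

Theorem proposition3p3 (R : realType) (g1 g2 : R) (hg1 : 0 < g1) (hg2 : 0 < g2)
  (P : probability (Qplus R) R) (HP : is_product_uniform P) (x0 y0 : nat) :
  P [set q : Qplus R | exists n : nat,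
       thick_diag (phi g1 g2 n q x0) (phi g1 g2 n q y0)] = 1%E.
Proof.
case: (leqP x0 y0) => h; first exact: main_ord.
have -> : [set q : Qplus R | exists n : nat,
       thick_diag (phi g1 g2 n q x0) (phi g1 g2 n q y0)] =
   [set q : Qplus R | exists n : nat,
       thick_diag (phi g1 g2 n q y0) (phi g1 g2 n q x0)].
  by apply/seteqP; split => q /= [n hn]; exists n; apply/thick_sym.
by apply: main_ord => //; exact: ltnW.
Qed.
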